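(* Let $A$ be a complex vector space of dimension $n\ge2$, let $h$ be a symmetric bilinear form on $A$, let $c\in A$ with $h(\cdot,c)\ne0$, and define $x*y=h(x,c)y+h(x,y)c$. If $h(c,c)\neq0$, then $(A,* )$ is isomorphic to $A^1_{(3)}$ or to $A^{(k),2}_{(3)}$ for some $k\in\{0,\dots,n-2\}$. If $h(c,c)=0$, then $(A,* )$ is isomorphic to $A^{(k),3}_{(3)}$ for some $k\in\{0,\dots,n-2\}$.
   Context: All algebras have basis $e_1,\dots,e_n$ and only the listed products of basis vectors are nonzero. $A^1_{(3)}$: $e_1e_1=2e_1$, $e_1e_j=e_j$, $e_je_j=e_1$ ($j=2,\dots,n$). $A^{(k),2}_{(3)}$ ($0\le k\le n-2$): $e_1e_1=2e_1$, $e_1e_j=e_j$ ($j=2,\dots,n$), $e_le_l=e_1$ ($l=3,\dots,k+2$). $A^{(k),3}_{(3)}$ ($0\le k\le n-2$): $e_1e_2=e_1$, $e_2e_1=2e_1$, $e_2e_2=e_2$, $e_2e_j=e_j$ ($j=3,\dots,n$), $e_le_l=e_1$ ($l=3,\dots,k+2$). *)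

(* Defs.v *)
From HB Require Import structures.
From mathcomp Require Import all_boot all_order all_algebra.
From mathcomp Require Import complex.
From mathcomp Require Import reals.
Set Implicit Arguments. Unset Strict Implicit. Unset Printing Implicit Defensive.
Import Order.TTheory GRing.Theory Num.Theory.
Local Open Scope ring_scope.

(* Complex numbers: C = R[i] for R : realType (R is the real numbers up to iso).
   Vector space of dimension n: 'rV[C]_n; basis e_1..e_n of the paper is
   e 0 .. e (n-1) here (paper index m <-> ordinal m-1). *)

Section Algs.
Variable (K : comRingType) (n : nat).

Definition e (i : 'I_n) : 'rV[K]_n := delta_mx 0 i.

Definition mult_of (T : 'I_n -> 'I_n -> 'rV[K]_n) (x y : 'rV[K]_n) : 'rV[K]_n :=
  \sum_(i < n) \sum_(j < n) (x 0 i * y 0 j) *: T i j.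

(* A^1_(3): e1e1=2e1, e1ej=ej, ejej=e1 (j>=2) *)
Definition A1_table (i j : 'I_n) : 'rV[K]_n :=
  if (val i == 0%N) && (val j == 0%N) then 2%:R *: e i
  else if (val i == 0%N) then e j
  else if i == j then (\sum_(l < n | val l == 0%N) e l)
  else 0.

(* A^{(k),2}_(3): e1e1=2e1, e1ej=ej (j>=2), elel=e1 (l=3..k+2) *)
Definition A2_table (k : nat) (i j : 'I_n) : 'rV[K]_n :=
  if (val i == 0%N) && (val j == 0%N) then 2%:R *: e i
  else if (val i == 0%N) then e j
  else if (i == j) && (2 <= val i <= k.+1)%N then (\sum_(l < n | val l == 0%N) e l)
  else 0.

(* A^{(k),3}_(3): e1e2=e1, e2e1=2e1, e2e2=e2, e2ej=ej (j>=3), elel=e1 (l=3..k+2) *)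
Definition A3_table (k : nat) (i j : 'I_n) : 'rV[K]_n :=
  let e1 := \sum_(l < n | val l == 0%N) e l in
  if (val i == 0%N) && (val j == 1%N) then e1
  else if (val i == 1%N) && (val j == 0%N) then 2%:R *: e1
  else if (val i == 1%N) && (val j == 1%N) then e j
  else if (val i == 1%N) && (2 <= val j)%N then e j
  else if (i == j) && (2 <= val i <= k.+1)%N then e1
  else 0.

Definition alg_iso (m1 m2 : 'rV[K]_n -> 'rV[K]_n -> 'rV[K]_n) : Prop :=
  exists f : 'rV[K]_n -> 'rV[K]_n,
    (forall (a : K) (x y : 'rV[K]_n), f (a *: x + y) = a *: f x + f y) /\
    bijective f /\
    (forall x y, f (m1 x y) = m2 (f x) (f y)).

Definition sym_bilinear (h : 'rV[K]_n -> 'rV[K]_n -> K) : Prop :=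
  (forall x y, h x y = h y x) /\
  (forall (a : K) x y z, h (a *: x + y) z = a * h x z + h y z).

Definition star (h : 'rV[K]_n -> 'rV[K]_n -> K) (c : 'rV[K]_n) (x y : 'rV[K]_n)
  : 'rV[K]_n := h x c *: y + h x y *: c.

End Algs.

(* Main.v *)
Require Import Defs.
From HB Require Import structures.
From mathcomp Require Import all_boot all_order all_algebra.
From mathcomp Require Import complex.
From mathcomp Require Import reals.
From mathcomp Require Import fingroup perm ring.
Import Order.TTheory GRing.Theory Num.Theory.
Local Open Scope ring_scope.
Set Implicit Arguments. Unset Strict Implicit. Unset Printing Implicit Defensive.


Section Mx.
Variable F : numClosedFieldType.

Definition dk m k : 'M[F]_m := \matrix_(i,j) ((i == j) && (i < k)%N)%:R.

Lemma complete m p (W : 'M[F]_(m, m + p)) : row_free W ->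
  exists K : 'M[F]_(p, m + p), col_mx W K \in unitmx.
Proof.
move=> fW.
have eqr : \rank (W^C)%MS = p by rewrite mxrank_compl (eqP fW) addKn.
exists (castmx (eqr, erefl) (row_base (W^C)%MS)).
rewrite -row_full_unit.
have e1 : (col_mx W (castmx (eqr, erefl) (row_base (W^C)%MS)) :=: W + (W^C)%MS)%MS.
  apply: eqmx_trans; first by apply: eqmx_sym; apply: addsmxE.
  by apply: adds_eqmx => //; apply: eqmx_trans (eqmx_cast _ _) (eq_row_base _).
by rewrite /row_full e1; apply: addsmx_compl_full.
Qed.

Lemma unit_lblock m1 m2 (X : 'M[F]_(m2, m1)) : block_mx 1%:M 0 X 1%:M \in unitmx.
Proof. by rewrite unitmxE det_lblock !det1 mulr1 unitr1. Qed.

Lemma unit_diag_block m1 m2 (A : 'M[F]_m1) (B : 'M[F]_m2) :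
  A \in unitmx -> B \in unitmx -> block_mx A 0 0 B \in unitmx.
Proof. by rewrite !unitmxE det_lblock unitrM => -> ->. Qed.

Lemma sandwich m1 m2 (A M : 'M[F]_m1) (B N : 'M[F]_m2) :
  block_mx A 0 0 B *m block_mx M 0 0 N *m (block_mx A 0 0 B)^T =
  block_mx (A *m M *m A^T) 0 0 (B *m N *m B^T).
Proof.
by rewrite tr_block_mx !trmx0 !mulmx_block ?mulmx0 ?mul0mx ?addr0 ?add0r
  ?mulmx0 ?mul0mx ?addr0 ?add0r.
Qed.

Lemma elim_step m1 m2 (S : 'M[F]_(m1 + m2)) : S^T = S -> ulsubmx S \in unitmx ->
  exists X S2, block_mx 1%:M 0 X 1%:M *m S *m (block_mx 1%:M 0 X 1%:M)^T
      = block_mx (ulsubmx S) 0 0 S2 /\ S2^T = S2.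
Proof.
move=> sS uH.
set H := ulsubmx S; set Rr := ursubmx S; set D := drsubmx S.
have eS : S = block_mx H Rr Rr^T D.
  rewrite -{1}(submxK S); congr block_mx.
  by rewrite /Rr trmx_ursub sS.
have sH : H^T = H by rewrite /H trmx_ulsub sS.
have sD : D^T = D by rewrite /D trmx_drsub sS.
exists (- (Rr^T *m invmx H)), (D - Rr^T *m invmx H *m Rr).
split; last first.
  by rewrite linearB /= sD !trmx_mul trmxK trmx_inv sH mulmxA.
rewrite eS tr_block_mx !trmx1 trmx0 !mulmx_block.
rewrite ?mul1mx ?mul0mx ?addr0 ?add0r ?mulmx1 ?mulmx0 ?addr0 ?add0r.
have e1 : - (Rr^T *m invmx H) *m H + Rr^T = 0.
  by rewrite mulNmx -mulmxA mulVmx // mulmx1 addNr.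
have e2 : H *m (- (Rr^T *m invmx H))^T + Rr = 0.
  by rewrite linearN /= mulmxN trmx_mul trmxK trmx_inv sH mulmxA mulmxV // mul1mx addNr.
by rewrite e1 e2 mul0mx add0r mulNmx addrC.
Qed.

Lemma quad_delta m (S : 'M[F]_m) (i j : 'I_m) :
  ((delta_mx 0 i : 'rV_m) *m S *m (delta_mx 0 j : 'rV_m)^T) 0 0 = S i j.
Proof. by rewrite -rowE trmx_delta -colE !mxE. Qed.

Lemma nz_quad m (S : 'M[F]_m) : S^T = S -> S != 0 ->
  exists x : 'rV[F]_m, (x *m S *m x^T) 0 0 != 0.
Proof.
move=> sS nS.
case: (boolP [exists i, S i i != 0]) => [/existsP [i Hi]|/existsPn Hd].
  by exists (delta_mx 0 i); rewrite quad_delta.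
case: (boolP [exists i, exists j, S i j != 0]) => [/existsP [i /existsP [j Hij]]|H0]; last first.
  case/eqP: nS; apply/matrixP => i j; rewrite mxE; apply/eqP.
  by move/existsPn: H0 => /(_ i) /existsPn /(_ j); rewrite negbK.
exists (delta_mx 0 i + delta_mx 0 j).
have E (A B : 'M[F]_1) : (A + B) 0 0 = A 0 0 + B 0 0 by rewrite mxE.
rewrite linearD /= !mulmxDl !mulmxDr !E !quad_delta.
have -> : S j i = S i j by rewrite -{1}sS mxE.
move: (Hd i) (Hd j); rewrite !negbK => /eqP -> /eqP ->.
by rewrite add0r addr0 -mulr2n mulrn_eq0 negb_or /= Hij.
Qed.

Lemma dk0 m : dk m 0 = 0.
Proof. by apply/matrixP => i j; rewrite !mxE andbF. Qed.

Lemma dkS m k : block_mx (1%:M : 'M[F]_1) 0 0 (dk m k) = dk (1 + m) k.+1.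
Proof.
apply/matrixP => i j.
case: (split_ordP i) => i' ->; case: (split_ordP j) => j' ->.
- by rewrite block_mxEul !mxE !ord1 /=.
- rewrite block_mxEur !mxE.
  by case: eqP => //= /(f_equal val) /=; rewrite ord1.
- rewrite block_mxEdl !mxE.
  by case: eqP => //= /(f_equal val) /=; rewrite ord1.
- rewrite block_mxEdr !mxE /=.
  have -> : (rshift 1 i' == rshift 1 j') = (i' == j').
    by apply/eqP/eqP => [/(f_equal val) /= [] /val_inj|->].
  by [].
Qed.

Lemma diag_lemma m (S : 'M[F]_m) : S^T = S ->
  exists P k, [/\ P \in unitmx, (k <= m)%N & P *m S *m P^T = dk m k].
Proof.
elim: m S => [|m IH] S sS.
  exists 1%:M, 0%N; split => //; first by rewrite unitmx1.
  by apply/matrixP => i; case: i.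
case: (eqVneq S 0) => [->|nS].
  by exists 1%:M, 0%N; split; rewrite ?unitmx1 // mulmx0 mul0mx dk0.
have [x Hx] := nz_quad sS nS.
have fx : row_free x.
  have x0 : x != 0 by apply: contraNneq Hx => ->; rewrite !mul0mx mxE.
  by rewrite /row_free rank_rV x0.
have [K uB0] := complete (m:=1) (p:=m) fx.
set B0 := col_mx x K in uB0.
set S' := B0 *m S *m B0^T.
have sS' : S'^T = S' by rewrite /S' !trmx_mul trmxK sS mulmxA.
set a := (x *m S *m x^T) 0 0.
have ul : ulsubmx S' = a%:M.
  rewrite /S' /B0 tr_col_mx mul_col_mx mul_col_row block_mxKul.
  exact: mx11_scalar.
have uH : ulsubmx S' \in unitmx by rewrite ul unitmxE det_scalar1 unitfE.
have [X [S2 [eE sS2]]] := elim_step sS' uH.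
have [P2 [k2 [uP2 lk2 eP2]]] := IH S2 sS2.
set s := (sqrtC a)^-1.
have sa : s * a * s = 1.
  rewrite /s mulrC mulrA -expr2 exprVn sqrtCK mulVf //.
exists (block_mx s%:M 0 0 P2 *m block_mx 1%:M 0 X 1%:M *m B0), k2.+1.
split => //.
  rewrite !unitmx_mul uB0 andbT; apply/andP; split; last by have := unit_lblock X.
  have hs : s%:M \in @unitmx F 1 by rewrite unitmxE det_scalar1 unitfE /s invr_eq0 sqrtC_eq0.
  by have := unit_diag_block hs uP2.
rewrite !trmx_mul !mulmxA.
have -> : block_mx s%:M 0 0 P2 *m block_mx 1%:M 0 X 1%:M *m B0 *m S *m B0^T
   *m (block_mx 1%:M 0 X 1%:M)^T *m (block_mx s%:M 0 0 P2)^T =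
   block_mx s%:M 0 0 P2 *m (block_mx 1%:M 0 X 1%:M *m S' *m (block_mx 1%:M 0 X 1%:M)^T)
    *m (block_mx s%:M 0 0 P2)^T by rewrite /S' !mulmxA.
rewrite eE ul sandwich eP2 -dkS.
have -> : s%:M *m a%:M *m (s%:M)^T = 1%:M :> 'M[F]_1.
  by rewrite tr_scalar_mx -!scalar_mxM sa.
by [].
Qed.

End Mx.


Section Bil.
Variables (F : numClosedFieldType) (n : nat) (h : 'rV[F]_n -> 'rV[F]_n -> F)
  (c : 'rV[F]_n).
Hypothesis hb : sym_bilinear h.

Lemma hsym x y : h x y = h y x. Proof. by case: hb. Qed.
Lemma hlin a x y z : h (a *: x + y) z = a * h x z + h y z. Proof. by case: hb. Qed.
Lemma h0l z : h 0 z = 0.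
Proof.
have E := hlin 1 0 0 z; rewrite scaler0 addr0 mul1r in E.
by apply: (@addrI _ (h 0 z)); rewrite addr0 -E.
Qed.
Lemma hDl x y z : h (x + y) z = h x z + h y z.
Proof. by rewrite -{1}[x]scale1r hlin mul1r. Qed.
Lemma hZl a x z : h (a *: x) z = a * h x z.
Proof. by rewrite -[a *: x]addr0 hlin h0l addr0. Qed.
Lemma hDr x y z : h z (x + y) = h z x + h z y.
Proof. by rewrite !(hsym z) hDl. Qed.
Lemma hZr a x z : h z (a *: x) = a * h z x.
Proof. by rewrite !(hsym z) hZl. Qed.
Lemma h0r z : h z 0 = 0.
Proof. by rewrite hsym h0l. Qed.
Lemma hsuml m (a : 'I_m -> F) (v : 'I_m -> 'rV[F]_n) z :
  h (\sum_i a i *: v i) z = \sum_i a i * h (v i) z.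
Proof.
rewrite (big_morph (fun x => h x z) (fun x y => hDl x y z) (h0l z)).
by apply: eq_bigr => i _; rewrite hZl.
Qed.
Lemma hsumr m (a : 'I_m -> F) (v : 'I_m -> 'rV[F]_n) z :
  h z (\sum_i a i *: v i) = \sum_i a i * h z (v i).
Proof. by rewrite hsym hsuml; apply: eq_bigr => i _; rewrite hsym. Qed.

Definition Gm : 'M[F]_n := \matrix_(i, j) h (e F i) (e F j).

Lemma Gm_sym : Gm^T = Gm.
Proof. by apply/matrixP => i j; rewrite !mxE hsym. Qed.

Lemma hrep x y : h x y = (x *m Gm *m y^T) 0 0.
Proof.
rewrite {1}(row_sum_delta x) hsuml !mxE.
under eq_bigr do rewrite {1}(row_sum_delta y) hsumr.
under [RHS]eq_bigr do rewrite !mxE big_distrl.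
rewrite exchange_big /=; apply: eq_bigr => i _; rewrite big_distrr.
by apply: eq_bigr => j _; rewrite !mxE /e /= mulrA [RHS]mulrAC.
Qed.

Lemma hrep11 x y : x *m Gm *m y^T = (h x y)%:M.
Proof. by rewrite hrep -mx11_scalar. Qed.

Definition gram m (W : 'M[F]_(m, n)) := W *m Gm *m W^T.

Lemma gramE m (W : 'M[F]_(m, n)) i j : gram W i j = h (row i W) (row j W).
Proof.
rewrite hrep !rowE trmx_mul trmx_delta !mulmxA.
have -> : 'e_i *m W *m Gm *m W^T = (delta_mx 0 i : 'rV_m) *m gram W.
  by rewrite /gram !mulmxA.
by rewrite -colE -rowE !mxE.
Qed.

Lemma gramM m p (P : 'M[F]_(p, m)) (W : 'M[F]_(m, n)) :
  gram (P *m W) = P *m gram W *m P^T.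
Proof. by rewrite /gram trmx_mul !mulmxA. Qed.

Lemma gram_sym m (W : 'M[F]_(m, n)) : (gram W)^T = gram W.
Proof. by rewrite /gram !trmx_mul trmxK Gm_sym mulmxA. Qed.

Lemma gram_col m1 m2 (W : 'M[F]_(m1, n)) (K : 'M[F]_(m2, n)) :
  gram (col_mx W K) = block_mx (gram W) (W *m Gm *m K^T) (K *m Gm *m W^T) (gram K).
Proof. by rewrite /gram tr_col_mx mul_col_mx mul_col_row. Qed.

Lemma gram_free m (W : 'M[F]_(m, n)) : gram W \in unitmx -> row_free W.
Proof.
move=> /mxrank_unit r; rewrite /row_free eqn_leq rank_leq_row /=.
by rewrite -{1}r /gram -mulmxA mxrankM_maxl.
Qed.

Lemma starsum m (a b : 'I_m -> F) (v w : 'I_m -> 'rV[F]_n) :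
  star h c (\sum_i a i *: v i) (\sum_j b j *: w j) =
  \sum_i \sum_j (a i * b j) *: star h c (v i) (w j).
Proof.
rewrite /star hsuml hsuml scaler_suml scaler_suml -big_split /=.
apply: eq_bigr => i _; rewrite hsumr scaler_sumr mulr_sumr scaler_suml -big_split /=.
apply: eq_bigr => j _ /=.
by rewrite scalerDr !scalerA mulrAC mulrA.
Qed.

Lemma final_iso (B : 'M[F]_n) (T : 'I_n -> 'I_n -> 'rV[F]_n) :
  B \in unitmx -> (forall i j, star h c (row i B) (row j B) = T i j *m B) ->
  alg_iso (star h c) (mult_of T).
Proof.
move=> uB HT.
exists (fun x => x *m invmx B); split.
  by move=> a x y; rewrite mulmxDl scalemxAl.
split; first by exists (fun x => x *m B) => x; rewrite ?mulmxK ?mulmxKV.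
move=> x y.
rewrite -[x](mulmxKV uB) -[y](mulmxKV uB).
move: (x *m invmx B) (y *m invmx B) => a b.
rewrite !mulmxK //.
symmetry; apply: (canRL (mulmxK uB)).
rewrite [a *m B]mulmx_sum_row [b *m B]mulmx_sum_row starsum /mult_of mulmx_suml.
apply: eq_bigr => i _; rewrite mulmx_suml; apply: eq_bigr => j _.
by rewrite HT scalemxAl.
Qed.

End Bil.

Section Bil2.
Variables (F : numClosedFieldType) (n : nat) (h : 'rV[F]_n -> 'rV[F]_n -> F)
  (c : 'rV[F]_n).
Hypothesis hb : sym_bilinear h.

Lemma final2 (B : 'M[F]_n) (T : 'I_n -> 'I_n -> 'rV[F]_n) (g : F) (i0 : 'I_n) :
  B \in unitmx -> c = g *: row i0 B ->
  (forall i j, T i j = (g * gram h B i i0) *: e F j + (g * gram h B i j) *: e F i0) ->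
  alg_iso (star h c) (mult_of T).
Proof.
move=> uB Hc HT; apply: (final_iso hb uB) => i j.
rewrite HT mulmxDl -!scalemxAl /e -!rowE !(gramE hb) /star.
by rewrite Hc (hZr hb) scalerA [_ * g]mulrC.
Qed.

Lemma assemble m1 m2 (W : 'M[F]_(m1, n)) (K : 'M[F]_(m2, n)) (X : 'M[F]_(m2, m1))
  (S2 : 'M[F]_m2) (Q : 'M[F]_m2) :
  block_mx 1%:M 0 X 1%:M *m gram h (col_mx W K) *m (block_mx 1%:M 0 X 1%:M)^T
    = block_mx (gram h W) 0 0 S2 ->
  gram h (block_mx 1%:M 0 0 Q *m block_mx 1%:M 0 X 1%:M *m col_mx W K)
    = block_mx (gram h W) 0 0 (Q *m S2 *m Q^T) /\
  block_mx 1%:M 0 0 Q *m block_mx 1%:M 0 X 1%:M *m col_mx W K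
    = col_mx W (Q *m (X *m W + K)).
Proof.
move=> eE; split.
  rewrite gramM trmx_mul.
  have -> : forall (M1 M2 : 'M[F]_(m1 + m2)) (G : 'M[F]_(m1 + m2)),
     M1 *m M2 *m G *m (M2^T *m M1^T) = M1 *m (M2 *m G *m M2^T) *m M1^T.
    by move=> M1 M2 G; rewrite !mulmxA.
  rewrite eE.
  have := sandwich 1%:M (gram h W) Q S2.
  by rewrite mul1mx trmx1 mulmx1.
rewrite !mulmx_block !mul_block_col.
rewrite ?mul1mx ?mul0mx ?mulmx0 ?mulmx1 ?addr0 ?add0r.
by rewrite mul1mx mul0mx addr0 mulmxDr mulmxA.
Qed.

End Bil2.


Section Tab.
Variables (K : comNzRingType) (n : nat).
Local Notation N := n.+2.
Local Notation o := (ord0 : 'I_N).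

Lemma sum_e0 : \sum_(l < N | val l == 0%N) e K l = e K o.
Proof. by rewrite (big_pred1 o) // => l; rewrite /= -val_eqE. Qed.

Lemma scale2 (v : 'rV[K]_N) : 2%:R *: v = 1 *: v + 1 *: v.
Proof. by rewrite scaler_nat scale1r mulr2n. Qed.

Lemma A1_dec (i j : 'I_N) : A1_table K i j =
  (val i == 0%N)%:R *: e K j + (i == j)%:R *: e K o.
Proof.
rewrite /A1_table sum_e0.
case: (eqVneq (val i) 0%N) => [i0|i0].
  have -> : i = o by apply: val_inj.
  case: (eqVneq (val j) 0%N) => [j0|j0].
    have -> : j = o by apply: val_inj.
    by rewrite /= scale2.
  have : o != j by rewrite -val_eqE /= eq_sym.
  by move/negbTE => -> /=; rewrite ?(negbTE j0) scale1r scale0r addr0.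
rewrite ?(negbTE i0) /= scale0r add0r.
by case: eqP => _; rewrite ?scale1r ?scale0r.
Qed.

Lemma A2_dec k (i j : 'I_N) : A2_table K k i j =
  (val i == 0%N)%:R *: e K j
  + ((i == j) && ((val i == 0%N) || (2 <= val i <= k.+1)%N))%:R *: e K o.
Proof.
rewrite /A2_table sum_e0.
case: (eqVneq (val i) 0%N) => [i0|i0].
  have -> : i = o by apply: val_inj.
  case: (eqVneq (val j) 0%N) => [j0|j0].
    have -> : j = o by apply: val_inj.
    by rewrite /= scale2.
  have : o != j by rewrite -val_eqE /= eq_sym.
  by move/negbTE => -> /=; rewrite ?(negbTE j0) scale1r scale0r addr0.
rewrite ?(negbTE i0) /= scale0r add0r.
by case: ifP => _; rewrite ?scale1r ?scale0r.
Qed.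

Lemma A3_dec k (i j : 'I_N) : A3_table K k i j =
  (val i == 1%N)%:R *: e K j
  + [|| (val i == 0%N) && (val j == 1%N), (val i == 1%N) && (val j == 0%N)
      | (i == j) && (2 <= val i <= k.+1)%N]%:R *: e K o.
Proof.
rewrite /A3_table sum_e0.
case: (eqVneq (val i) 0%N) => [i0|i0].
  rewrite i0 /= scale0r add0r andbF orbF.
  by case: (eqVneq (val j) 1%N) => [j1|j1] /=; rewrite ?scale1r ?scale0r.
case: (eqVneq (val i) 1%N) => [i1|i1] /=.
  rewrite i1 /= scale1r.
  case: (eqVneq (val j) 0%N) => [j0|j0] /=.
    have -> : j = o by apply: val_inj.
    by rewrite scale2 scale1r.
  rewrite andbF scale0r addr0.
  case: (eqVneq (val j) 1%N) => [j1|j1] //=.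
  by rewrite ltn_neqAle eq_sym j1 lt0n j0.
rewrite ?(negbTE i0) ?(negbTE i1) /= scale0r add0r.
by case: ifP => _; rewrite ?scale1r ?scale0r.
Qed.

End Tab.


Section Ent.
Variable F : numClosedFieldType.

Lemma perm_sand m (s : 'S_m) (M : 'M[F]_m) :
  perm_mx s *m M *m (perm_mx s)^T = \matrix_(i, j) M (s i) (s j).
Proof.
rewrite tr_perm_mx -col_permE -row_permE.
by apply/matrixP => i j; rewrite !mxE.
Qed.

Lemma lr_neq m1 m2 (i : 'I_m1) (j : 'I_m2) : (lshift m2 i == rshift m1 j) = false.
Proof. by apply/negbTE; rewrite -val_eqE /= neq_ltn ltn_addr. Qed.
Lemma rl_neq m1 m2 (i : 'I_m1) (j : 'I_m2) : (rshift m1 j == lshift m2 i) = false.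
Proof. by rewrite eq_sym lr_neq. Qed.
Lemma ll_eq m1 m2 (i j : 'I_m1) : (lshift m2 i == lshift m2 j) = (i == j).
Proof. by rewrite -val_eqE /= val_eqE. Qed.
Lemma rr_eq m1 m2 (i j : 'I_m2) : (rshift m1 i == rshift m1 j) = (i == j).
Proof. by rewrite -val_eqE /= eqn_add2l val_eqE. Qed.

Lemma blk1_entries m (a : F) (D : 'M[F]_m) (d' : nat -> bool) :
  (forall i j : 'I_m, D i j = ((i == j) && d' i)%:R) ->
  forall i j : 'I_(1 + m), block_mx (a%:M : 'M_1) 0 0 (a *: D) i j
     = ((i == j) && ((val i == 0%N) || d' (val i).-1))%:R * a.
Proof.
move=> HD i j.
case: (split_ordP i) => i' ->; case: (split_ordP j) => j' ->.
- by rewrite block_mxEul ll_eq !ord1 !mxE /= mul1r.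
- by rewrite block_mxEur lr_neq mxE mul0r.
- by rewrite block_mxEdl rl_neq mxE mul0r.
- by rewrite block_mxEdr rr_eq !mxE HD /= mulrC.
Qed.

Lemma blk2_entries m k (i j : 'I_((1 + 1) + m)) :
  block_mx (block_mx (0 : 'M[F]_1) 1%:M 1%:M 0) 0 0 (dk F m k) i j =
  [|| (val i == 0%N) && (val j == 1%N), (val i == 1%N) && (val j == 0%N)
    | (i == j) && (2 <= val i <= k.+1)%N]%:R.
Proof.
case: (split_ordP i) => i' ->; case: (split_ordP j) => j' ->;
rewrite ?block_mxEul ?block_mxEur ?block_mxEdl ?block_mxEdr ?ll_eq ?lr_neq ?rl_neq ?rr_eq /=.
all: try (case: (split_ordP i') => a ->); try (case: (split_ordP j') => b ->).
all: rewrite ?block_mxEul ?block_mxEur ?block_mxEdl ?block_mxEdr ?ll_eq ?lr_neq ?rl_neq ?rr_eq /= ?ord1 ?mxE /=.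
all: rewrite ?andbF ?andbT //=.
Qed.



Lemma tperm_dk N (kk : 'I_N.+1) (i j : 'I_N.+1) :
  (perm_mx (tperm 0 kk) *m dk F N.+1 kk *m (perm_mx (tperm 0 kk))^T) i j
  = ((i == j) && ((val i != 0%N) && (val i <= kk)%N))%:R.
Proof.
rewrite perm_sand !mxE (inj_eq perm_inj); congr (_%:R); congr andb.
case: tpermP => [->|->|ni nk] /=.
- by rewrite ltnn.
- by rewrite lt0n leqnn andbT.
have h1 : val i != val kk by apply/eqP => e; apply: nk; apply: val_inj.
have h2 : val i != 0%N by apply/eqP => e; apply: ni; apply: val_inj.
by rewrite ltn_neqAle h1 h2.
Qed.

End Ent.


Section Case1.
Variables (F : numClosedFieldType) (n' : nat) (h : 'rV[F]_n'.+2 -> 'rV[F]_n'.+2 -> F)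
  (c : 'rV[F]_n'.+2).
Hypothesis hb : sym_bilinear h.

Lemma case1 : h c c != 0 ->
  alg_iso (star h c) (mult_of (@A1_table _ n'.+2)) \/
  exists k : nat, (k <= n'.+2 - 2)%N /\ alg_iso (star h c) (mult_of (@A2_table _ n'.+2 k)).
Proof.
move=> hcc.
pose t := (h c c)^-1.
have t0 : t != 0 by rewrite invr_eq0.
pose W : 'M[F]_(1, n'.+2) := t *: c.
have gW : gram h W = t%:M.
  by rewrite /gram (hrep11 hb) (hZl hb) (hZr hb) [t * h c c]mulVf // mulr1.
have uW : gram h W \in unitmx by rewrite gW unitmxE det_scalar1 unitfE.
have fW := gram_free uW.
have [K uB0] := complete (m:=1) (p:=n'.+1) fW.
have sS : (gram h (col_mx W K))^T = gram h (col_mx W K) := gram_sym hb _.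
have ul : ulsubmx (gram h (col_mx W K)) = gram h W by rewrite gram_col block_mxKul.
have uH : ulsubmx (gram h (col_mx W K)) \in unitmx by rewrite ul.
have [X [S2 [eE sS2]]] := elim_step sS uH.
rewrite ul in eE.
have [P2 [k [uP2 lk eP2]]] := diag_lemma sS2.
pose s := sqrtC t.
have s2 : s * s = t by rewrite -expr2 sqrtCK.
have s0 : s != 0 by rewrite sqrtC_eq0.
have fin : forall (M : 'M[F]_n'.+1) (d' : nat -> bool) (T : 'I_n'.+2 -> 'I_n'.+2 -> 'rV[F]_n'.+2),
    M \in unitmx ->
    (forall i j : 'I_n'.+1, (M *m S2 *m M^T) i j = ((i == j) && d' i)%:R) ->
    (forall i j, T i j = (val i == 0%N)%:R *: e F j
         + ((i == j) && ((val i == 0%N) || d' (val i).-1))%:R *: e F ord0) ->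
    alg_iso (star h c) (mult_of T).
  move=> M d' T uM HM HT.
  pose Q := s *: M.
  have [gB eB] := assemble Q eE.
  set B := block_mx 1%:M 0 0 Q *m block_mx 1%:M 0 X 1%:M *m col_mx W K in gB eB.
  have uB : B \in unitmx.
    rewrite !unitmx_mul; apply/andP; split; last by [].
    apply/andP; split; last by have := unit_lblock X.
    have uQ : Q \in unitmx by rewrite unitmxZ // unitfE.
    by have := unit_diag_block (unitmx1 F 1) uQ.
  have eQ : Q *m S2 *m Q^T = t *: (M *m S2 *m M^T).
    by rewrite /Q linearZ /= -!scalemxAl -scalemxAr scalerA s2.
  rewrite eQ gW in gB.
  have gE : forall i j, gram h B i j
       = ((i == j) && ((val i == 0%N) || d' (val i).-1))%:R * t.
    move=> i j; rewrite gB.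
    by have := blk1_entries t HM i j.
  apply: (final2 hb (g := h c c) (i0 := ord0) uB).
    have -> : row ord0 B = W.
      rewrite eB; have -> : (ord0 : 'I_n'.+2) = lshift n'.+1 (ord0 : 'I_1) by apply: val_inj.
      apply: etrans (rowKu _ _ _) _; apply/matrixP => i j; by rewrite (ord1 i) mxE.
    by rewrite /W scalerA mulfV // scale1r.
  move=> i j; rewrite HT !gE /=.
  have -> : (i == ord0) = (val i == 0%N) by rewrite -val_eqE.
  have E (a b : bool) : a && (a || b) = a by case: a.
  by rewrite E !(mulrCA (h c c)) /t mulfV // !mulr1.
case: (ltnP k n'.+1) => [ltk|gek].
  right; exists k; split; first by rewrite !subSS subn0 -ltnS.
  pose kk : 'I_n'.+1 := Ordinal ltk.
  apply: (fin (perm_mx (tperm 0 kk) *m P2) (fun v => (v != 0%N) && (v <= k)%N)).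
  - by rewrite unitmx_mul unitmx_perm.
  - move=> i j; rewrite trmx_mul !mulmxA -(mulmxA _ P2) -(mulmxA _ _ P2^T) eP2.
    by have := tperm_dk F kk i j.
  - move=> i j; rewrite A2_dec; congr (_ + _ *: _); congr (_%:R); congr andb.
    by case: (val i) => [|[|v]].
have ek : k = n'.+1 by apply/eqP; rewrite eqn_leq lk gek.
left; apply: (fin P2 (fun _ => true)) => //.
  by move=> i j; rewrite eP2 ek mxE ltn_ord.
by move=> i j; rewrite A1_dec orbT andbT.
Qed.
End Case1.

Section Case2.
Variables (F : numClosedFieldType) (n' : nat) (h : 'rV[F]_n'.+2 -> 'rV[F]_n'.+2 -> F)
  (c : 'rV[F]_n'.+2).
Hypothesis hb : sym_bilinear h.

Lemma case2 : h c c = 0 -> (exists x, h x c != 0) ->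
  exists k : nat, (k <= n'.+2 - 2)%N /\ alg_iso (star h c) (mult_of (@A3_table _ n'.+2 k)).
Proof.
move=> hcc [x hx].
pose b := h c x.
have b0 : b != 0 by rewrite /b (hsym hb).
pose g0 := h x x.
pose u := b^-1 *: (x + (- (g0 / (2 * b))) *: c).
have hxc : h x c = b by rewrite (hsym hb).
have hcu : h c u = 1.
  rewrite /u (hZr hb) (hDr hb) (hZr hb) hcc -/b mulr0 addr0 mulVf //.
have huc : h u c = 1 by rewrite (hsym hb).
have huu : h u u = 0.
  rewrite /u (hZl hb) (hZr hb) (hDl hb) !(hDr hb) !(hZl hb) !(hZr hb) hcc -/b -/g0 hxc.
  by field.
pose W : 'M[F]_(1 + 1, n'.+2) := col_mx c u.
have gW : gram h W = block_mx 0 1%:M 1%:M 0.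
  rewrite /W gram_col /gram !(hrep11 hb) hcc hcu huc huu.
  by rewrite !raddf0.
have uW : gram h W \in unitmx.
  suff /mulmx1_unit[] : gram h W *m gram h W = 1%:M by [].
  rewrite gW.
  rewrite mulmx_block !mul0mx !mulmx0 !add0r !addr0 mulmx1.
  by rewrite -scalar_mx_block.
have fW := gram_free uW.
have [K uB0] := complete (m:=1 + 1) (p:=n') fW.
have sS : (gram h (col_mx W K))^T = gram h (col_mx W K) := gram_sym hb _.
have ul : ulsubmx (gram h (col_mx W K)) = gram h W by rewrite gram_col block_mxKul.
have uH : ulsubmx (gram h (col_mx W K)) \in unitmx by rewrite ul.
have [X [S2 [eE sS2]]] := elim_step sS uH.
rewrite ul in eE.
have [P2 [k [uP2 lk eP2]]] := diag_lemma sS2.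
exists k; split; first by rewrite !subSS subn0.
have [gB eB] := assemble P2 eE.
set B := block_mx 1%:M 0 0 P2 *m block_mx 1%:M 0 X 1%:M *m col_mx W K in gB eB.
have uB : B \in unitmx.
  rewrite !unitmx_mul; apply/andP; split; last by [].
  apply/andP; split; last by have := unit_lblock X.
  by have := unit_diag_block (unitmx1 F (1 + 1)) uP2.
rewrite eP2 gW in gB.
have gE : forall i j, gram h B i j =
    [|| (val i == 0%N) && (val j == 1%N), (val i == 1%N) && (val j == 0%N)
    | (i == j) && (2 <= val i <= k.+1)%N]%:R.
  by move=> i j; rewrite gB; have := blk2_entries F k i j.
apply: (final2 hb (g := 1) (i0 := ord0) uB).
  rewrite scale1r eB.
  have -> : (ord0 : 'I_n'.+2) = lshift n' (lshift 1 (ord0 : 'I_1)) by apply: val_inj.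
  apply: esym; apply: etrans (rowKu _ _ _) _; apply: etrans (rowKu _ _ _) _.
  by apply/matrixP => i j; rewrite (ord1 i) mxE.
move=> i j; rewrite A3_dec !mul1r !gE /= andbF andbT /=.
congr (_%:R *: _ + _).
by case: i => [[|[|v]] Hi].
Qed.
End Case2.

Unset Implicit Arguments.

Theorem proposition3p7 (R : realType) (n : nat) (h : 'rV[R[i]]_n -> 'rV[R[i]]_n -> R[i])
  (c : 'rV[R[i]]_n) :
  (2 <= n)%N ->
  sym_bilinear h ->
  (exists x, h x c != 0) ->
  (h c c != 0 ->
     alg_iso (star h c) (mult_of (@A1_table _ n)) \/
     exists k : nat, (k <= n - 2)%N /\ alg_iso (star h c) (mult_of (@A2_table _ n k))) /\
  (h c c = 0 ->
     exists k : nat, (k <= n - 2)%N /\ alg_iso (star h c) (mult_of (@A3_table _ n k))).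
Proof.
move: h c; case: n => [|[|n']] h c n2 //.
move=> hb hx; split.
  exact: (case1 hb).
move=> hcc; exact: (case2 hb hcc hx).
Qed.
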